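(* Let $(X,d)$ be a compact metric space and $(X_k)_k$ a sequence of subsets of $X$, with $d_k$ the restriction of $d$ to $X_k\times X_k$. Assume there is $C>0$ such that $(X_k,d_k)$ is $C$-quasiconvex for every $k$, and $\lim_{k\to\infty}d_H(X_k,X)=0$. Then $(X,d)$ is $C$-quasiconvex.
   Context: A metric space $(Y,\delta)$ is $C$-quasiconvex if $\delta_I\le C\delta$, where $\delta_I(x,y)$ is the infimum of the lengths of continuous curves in $Y$ from $x$ to $y$ (length $=\sup\sum_i\delta(\gamma(t_i),\gamma(t_{i+1}))$ over partitions). The Hausdorff–Pompeiu distance is $d_H(A,B)=\max\{\sup_{x\in A}d(x,B),\sup_{y\in B}d(y,A)\}$ with $d(x,C)=\inf_{z\in C}d(x,z)$. *)

(* Defs.v *)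
From Stdlib Require Import Reals List.
Open Scope R_scope.

Definition is_metric {X : Type} (d : X -> X -> R) : Prop :=
  (forall x y, 0 <= d x y) /\
  (forall x y, d x y = 0 <-> x = y) /\
  (forall x y, d x y = d y x) /\
  (forall x y z, d x z <= d x y + d y z).

Definition d_open {X : Type} (d : X -> X -> R) (U : X -> Prop) : Prop :=
  forall x, U x -> exists r, 0 < r /\ forall y, d x y < r -> U y.

Definition d_compact {X : Type} (d : X -> X -> R) : Prop :=
  forall (I : Type) (U : I -> X -> Prop),
    (forall i, d_open d (U i)) ->
    (forall x, exists i, U i x) ->
    exists l : list I, forall x, exists i, In i l /\ U i x.

Definition curve_in {X : Type} (d : X -> X -> R) (Y : X -> Prop) (g : R -> X) : Prop :=
  (forall t, 0 <= t <= 1 -> Y (g t)) /\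
  (forall t, 0 <= t <= 1 -> forall eps, 0 < eps ->
     exists del, 0 < del /\
       forall s, 0 <= s <= 1 -> Rabs (s - t) < del -> d (g s) (g t) < eps).

Fixpoint psum {X : Type} (d : X -> X -> R) (g : R -> X) (t : nat -> R) (n : nat) : R :=
  match n with
  | O => 0
  | S m => psum d g t m + d (g (t m)) (g (t (S m)))
  end.

Definition is_partition (t : nat -> R) (n : nat) : Prop :=
  t O = 0 /\ t n = 1 /\ (forall i, (i < n)%nat -> t i <= t (S i)).

Definition length_le {X : Type} (d : X -> X -> R) (g : R -> X) (L : R) : Prop :=
  forall t n, is_partition t n -> psum d g t n <= L.

(* (Y, d|Y) is C-quasiconvex: for x, y in Y, the infimum of lengths of curves
   in Y from x to y is <= C d(x,y); i.e. for every eps > 0 there is such a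
   curve of length <= C d(x,y) + eps. *)
Definition quasiconvex {X : Type} (d : X -> X -> R) (Y : X -> Prop) (C : R) : Prop :=
  forall x y, Y x -> Y y -> forall eps, 0 < eps ->
    exists g, curve_in d Y g /\ g 0 = x /\ g 1 = y /\ length_le d g (C * d x y + eps).

Definition hausdorff_le {X : Type} (d : X -> X -> R) (A B : X -> Prop) (r : R) : Prop :=
  (forall x, A x -> forall eta, 0 < eta -> exists y, B y /\ d x y < r + eta) /\
  (forall y, B y -> forall eta, 0 < eta -> exists x, A x /\ d y x < r + eta).

Definition hausdorff_cvg {X : Type} (d : X -> X -> R) (A : nat -> X -> Prop) (B : X -> Prop) : Prop :=
  forall eps, 0 < eps -> exists N, forall k, (N <= k)%nat -> hausdorff_le d (A k) B eps.

(* Main.v *)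
Require Import Defs.
From Stdlib Require Import Reals Lra Lia List Classical ClassicalEpsilon.
Open Scope R_scope.

Fixpoint csum {X} (d : X -> X -> R) (c : nat -> X) (m : nat) : R :=
  match m with O => 0 | S k => csum d c k + d (c k) (c (S k)) end.

Definition chain {X} (d : X->X->R) (del : R) (x y : X) (L : R) : Prop :=
  exists c m, c O = x /\ c m = y /\
    (forall i, (i < m)%nat -> d (c i) (c (S i)) < del) /\ csum d c m <= L.

Definition QQ {X} (d : X->X->R) (x y : X) (L : R) :=
  forall del eps, 0 < del -> 0 < eps -> chain d del x y (L + eps).

Lemma csum_split {X} (d : X->X->R) c i j :
  csum d c (i + j) = csum d c i + csum d (fun k => c (i + k)%nat) j.
Proof.
  induction j as [|j IH]; simpl.
  - rewrite Nat.add_0_r; lra.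
  - rewrite Nat.add_succ_r; simpl; rewrite IH.
    replace (S (i + j)) with (i + S j)%nat by lia. lra.
Qed.

Lemma csum_ext {X} (d : X->X->R) c c' m :
  (forall i, (i <= m)%nat -> c i = c' i) -> csum d c m = csum d c' m.
Proof.
  induction m as [|m IH]; intros H; simpl; auto.
  rewrite IH by (intros; apply H; lia). rewrite (H m), (H (S m)) by lia. reflexivity.
Qed.

Lemma csum_ge {X} (d : X->X->R) c m : is_metric d -> d (c O) (c m) <= csum d c m.
Proof.
  intros (H0 & H1 & H2 & H3). induction m as [|m IH]; simpl.
  - assert (d (c O) (c O) = 0) by (apply H1; reflexivity). lra.
  - specialize (H3 (c O) (c m) (c (S m))). lra.
Qed.

Lemma chain_d {X} (d : X->X->R) del x y L : is_metric d -> chain d del x y L -> d x y <= L.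
Proof.
  intros Hm (c & m & <- & <- & _ & Hs). pose proof (csum_ge d c m Hm). lra.
Qed.

Lemma chain_mono {X} (d : X->X->R) del del' x y L L' :
  del <= del' -> L <= L' -> chain d del x y L -> chain d del' x y L'.
Proof.
  intros h1 h2 (c & m & a & b & e & f). exists c, m. repeat split; auto.
  intros i hi; specialize (e i hi); lra. lra.
Qed.

Lemma chain_refl {X} (d : X->X->R) del x : chain d del x x 0.
Proof. exists (fun _ => x), O. simpl. repeat split; try lia; lra. Qed.

Lemma chain_one {X} (d : X->X->R) del x y : d x y < del -> chain d del x y (d x y).
Proof.
  intros h. exists (fun i => match i with O => x | _ => y end), 1%nat.
  simpl. repeat split; try lra. intros i hi. replace i with O by lia. exact h.
Qed.

Lemma chain_app {X} (d : X->X->R) del x y z L1 L2 :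
  chain d del x y L1 -> chain d del y z L2 -> chain d del x z (L1 + L2).
Proof.
  intros (c1 & m1 & a1 & b1 & e1 & f1) (c2 & m2 & a2 & b2 & e2 & f2).
  set (c := fun i => if Nat.ltb i m1 then c1 i else c2 (i - m1)%nat).
  assert (Hl : forall i, (i <= m1)%nat -> c i = c1 i).
  { intros i hi. unfold c. destruct (Nat.ltb_spec i m1). reflexivity.
    replace i with m1 by lia. rewrite Nat.sub_diag, a2, b1. reflexivity. }
  assert (Hr : forall k, c (m1 + k)%nat = c2 k).
  { intros k. unfold c. destruct (Nat.ltb_spec (m1 + k) m1). lia.
    f_equal; lia. }
  exists c, (m1 + m2)%nat. repeat split.
  - rewrite Hl by lia. exact a1.
  - rewrite Hr. exact b2.
  - intros i hi. destruct (Nat.lt_ge_cases i m1).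
    + rewrite !Hl by lia. apply e1; lia.
    + replace i with (m1 + (i - m1))%nat by lia. rewrite <- Nat.add_succ_r, !Hr. apply e2; lia.
  - rewrite csum_split. rewrite (csum_ext d c c1 m1 Hl).
    rewrite (csum_ext d _ c2 m2) by (intros; apply Hr). lra.
Qed.

Lemma QQ_d {X} (d : X->X->R) x y L : is_metric d -> QQ d x y L -> d x y <= L.
Proof.
  intros Hm H. apply Rnot_lt_le; intro hl.
  pose proof (chain_d d _ _ _ _ Hm (H 1 ((d x y - L)/2) ltac:(lra) ltac:(lra))). lra.
Qed.

Lemma QQ_trans {X} (d : X->X->R) x y z L1 L2 : QQ d x y L1 -> QQ d y z L2 -> QQ d x z (L1 + L2).
Proof.
  intros H1 H2 del eps hd he.
  eapply chain_mono; [apply Rle_refl| |apply (chain_app d del x y z); [apply (H1 del (eps/2)) | apply (H2 del (eps/2))]]; lra.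
Qed.

Lemma QQ_refl {X} (d : X->X->R) x : QQ d x x 0.
Proof. intros del eps hd he. eapply chain_mono; [apply Rle_refl| |apply chain_refl]. lra. Qed.

Lemma QQ_mono {X} (d : X->X->R) x y L L' : L <= L' -> QQ d x y L -> QQ d x y L'.
Proof. intros h H del eps hd he. eapply chain_mono; [apply Rle_refl| |apply H]; eauto. lra. Qed.
Lemma search (P : nat -> R) (T : R) m : P O <= T ->
  exists i, (i <= m)%nat /\ P i <= T /\ (i = m \/ T < P (S i)).
Proof.
  intros H0.
  assert (G : forall k j, (j + k = m)%nat -> P j <= T ->
    exists i, (j <= i <= m)%nat /\ P i <= T /\ (i = m \/ T < P (S i))).
  { induction k as [|k IH]; intros j hj hp.
    - exists j. repeat split; try lia; auto.
    - destruct (Rlt_or_le T (P (S j))) as [h|h].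
      + exists j. repeat split; try lia; auto.
      + destruct (IH (S j)) as (i & hi & h1 & h2); try lia; auto.
        exists i. repeat split; try lia; auto. }
  destruct (G m O) as (i & hi & h1 & h2); auto. exists i; repeat split; auto; lia.
Qed.

Lemma cluster {X} (d : X -> X -> R) : is_metric d -> d_compact d ->
  forall z : nat -> X, exists p, forall eta, 0 < eta -> forall N, exists n, (N <= n)%nat /\ d (z n) p < eta.
Proof.
  intros (Hd0 & Hd1 & Hd2 & Hd3) Hc z. apply NNPP; intro Hn.
  set (U := fun (i : X * R * nat) (y : X) => let '(p, eta, N) := i in
     0 < eta /\ (forall n, (N <= n)%nat -> eta <= d (z n) p) /\ d p y < eta).
  destruct (Hc _ U) as [l Hl].
  - intros [[p eta] N] x H0. unfold U in H0. destruct H0 as [h1 [h2 h3]]. exists (eta - d p x). split; [lra|].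
    intros y hy. repeat split; auto. specialize (Hd3 p x y). lra.
  - intros x. assert (Hx : exists eta, 0 < eta /\ exists N, forall n, (N <= n)%nat -> eta <= d (z n) x).
    { apply NNPP; intro H'. apply Hn. exists x. intros eta he N. apply NNPP; intro H2.
      apply H'. exists eta. split; auto. exists N. intros n hn. apply Rnot_lt_le. intro h3.
      apply H2. exists n. auto. }
    destruct Hx as (eta & he & N & HN). exists (x, eta, N). simpl. repeat split; auto.
    rewrite (proj2 (Hd1 x x) eq_refl). exact he.
  - set (M := fold_right (fun (i : X * R * nat) acc => Nat.max (snd i) acc) O l).
    assert (HM : forall i, In i l -> (snd i <= M)%nat).
    { unfold M. clear. induction l as [|a l IH]; simpl; intros i hin; [contradiction|].
      destruct hin as [->|h]; [lia|]. specialize (IH i h). lia. }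
    destruct (Hl (z M)) as ([[p eta] N] & hin & h1 & h2 & h3).
    specialize (HM _ hin). simpl in HM. specialize (h2 M HM). rewrite Hd2 in h2. lra.
Qed.

Lemma midpoint {X} (d : X -> X -> R) x y L : is_metric d -> d_compact d -> QQ d x y L ->
  exists z, QQ d x z (L/2) /\ QQ d z y (L/2).
Proof.
  intros Hm Hc H.
  assert (Hstep : forall n : nat, exists z, chain d (/ INR (S n)) x z (L/2 + / INR (S n)) /\
                                      chain d (/ INR (S n)) z y (L/2 + 2 * / INR (S n))).
  { intros n. set (e := / INR (S n)).
    assert (he : 0 < e) by (apply Rinv_0_lt_compat, lt_0_INR; lia).
    destruct (H e e he he) as (c & m & a & b & st & sm).
    set (S0 := csum d c m).
    destruct (search (csum d c) (S0/2) m) as (i & hi & h1 & h2). simpl; unfold S0.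
    pose proof (csum_ge d c m Hm). pose proof (proj1 Hm (c O) (c m)). lra.
    exists (c i). split.
    - exists c, i. repeat split; auto. intros j hj; apply st; lia. unfold S0 in *. lra.
    - exists (fun k => c (i + k)%nat), (m - i)%nat. repeat split.
      + rewrite Nat.add_0_r; reflexivity.
      + replace (i + (m - i))%nat with m by lia. exact b.
      + intros j hj. replace (i + S j)%nat with (S (i + j)) by lia. apply st. lia.
      + pose proof (csum_split d c i (m - i)) as Hs. replace (i + (m - i))%nat with m in Hs by lia.
        fold S0 in Hs. destruct (Nat.eq_dec i m) as [->|hne].
        * rewrite Nat.sub_diag. simpl. pose proof (proj1 Hm x y) as Q1.
          pose proof (csum_ge d c m Hm) as Q2. rewrite a, b in Q2. fold S0 in Q2, sm. lra.
        * destruct h2 as [h2|h2]; [lia|]. simpl in h2. fold S0 in sm. specialize (st i ltac:(lia)). lra. }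
  set (zf := fun n => proj1_sig (constructive_indefinite_description _ (Hstep n))).
  assert (Hz : forall n, chain d (/ INR (S n)) x (zf n) (L/2 + / INR (S n)) /\
                        chain d (/ INR (S n)) (zf n) y (L/2 + 2 * / INR (S n))).
  { intros n. unfold zf. destruct (constructive_indefinite_description _ (Hstep n)). exact a. }
  destruct (cluster d Hm Hc zf) as [p Hp].
  assert (Hpick : forall del eps, 0 < del -> 0 < eps -> exists n,
     / INR (S n) < Rmin del (eps/3) /\ d (zf n) p < Rmin del (eps/3)).
  { intros del eps hd he. assert (ha : 0 < Rmin del (eps/3)) by (apply Rmin_pos; lra).
    destruct (archimed_cor1 _ ha) as (N & hN & hN0).
    destruct (Hp _ ha N) as (n & hn & hd').
    exists n. split; auto. eapply Rle_lt_trans; [|exact hN].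
    apply Rinv_le_contravar. apply lt_0_INR; lia. apply le_INR; lia. }
  exists p. split.
  - intros del eps hd he. destruct (Hpick del eps hd he) as (n & h1 & h2).
    pose proof (Rmin_l del (eps/3)). pose proof (Rmin_r del (eps/3)).
    destruct (Hz n) as [c1 _].
    eapply chain_mono; [apply Rle_refl| |apply (chain_app d del x (zf n) p)].
    2: { eapply chain_mono; [|apply Rle_refl|exact c1]. lra. }
    2: { apply chain_one. lra. }
    lra.
  - intros del eps hd he. destruct (Hpick del eps hd he) as (n & h1 & h2).
    pose proof (Rmin_l del (eps/3)). pose proof (Rmin_r del (eps/3)).
    destruct (Hz n) as [_ c2].
    rewrite (proj1 (proj2 (proj2 Hm))) in h2.
    eapply chain_mono; [apply Rle_refl| |apply (chain_app d del p (zf n) y)].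
    2: { apply chain_one. lra. }
    2: { eapply chain_mono; [|apply Rle_refl|exact c2]. lra. }
    lra.
Qed.
Lemma fine {X} (d : X -> X -> R) (Y : X -> Prop) g del : is_metric d -> curve_in d Y g -> 0 < del ->
  exists t n, is_partition t n /\ (forall i, (i < n)%nat -> d (g (t i)) (g (t (S i))) < del).
Proof.
  intros (Hd0 & Hd1 & Hd2 & Hd3) [_ Hg] hdel.
  set (P := fun s => exists t n, t O = 0 /\ t n = s /\
     (forall i, (i < n)%nat -> t i <= t (S i) /\ d (g (t i)) (g (t (S i))) < del)).
  assert (Ext : forall s0 s', P s0 -> s0 <= s' -> d (g s0) (g s') < del -> P s').
  { intros s0 s' (t & n & a & b & c) h1 h2.
    exists (fun i => if Nat.leb i n then t i else s'), (S n). cbv beta. split; [|split].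
    - destruct (Nat.leb_spec 0 n); [exact a|lia].
    - destruct (Nat.leb_spec (S n) n); [lia|reflexivity].
    - intros i hi. split.
    + destruct (Nat.leb_spec i n); [|lia].
      destruct (Nat.leb_spec (S i) n). apply c; lia. replace i with n by lia. lra.
    + destruct (Nat.leb_spec i n); [|lia].
      destruct (Nat.leb_spec (S i) n). apply c; lia. replace i with n by lia. rewrite b. exact h2. }
  set (E := fun s => 0 <= s <= 1 /\ P s).
  assert (E0 : E 0).
  { split. lra. exists (fun _ => 0), O. repeat split; try lia. }
  destruct (completeness E) as [sig [Hub Hlub]].
  { exists 1. intros s [hs _]. lra. }
  { exists 0. exact E0. }
  assert (hs0 : 0 <= sig) by (apply Hub; exact E0).
  assert (hs1 : sig <= 1) by (apply Hlub; intros s [hs _]; lra).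
  destruct (Hg sig (conj hs0 hs1) (del/2) ltac:(lra)) as (del0 & hd0 & Hc).
  assert (Hex : exists s0, E s0 /\ sig - del0 < s0).
  { apply NNPP; intro Hn. assert (sig <= sig - del0); [|lra].
    apply Hlub. intros s hs. apply Rnot_lt_le; intro hl. apply Hn. exists s. split; [auto|lra]. }
  destruct Hex as (s0 & [hs0a hs0b] & hs0c).
  assert (hs0d : s0 <= sig) by (apply Hub; split; auto).
  set (s' := Rmin 1 (sig + del0/2)).
  assert (Hs' : E s').
  { pose proof (Rmin_l 1 (sig + del0/2)). pose proof (Rmin_r 1 (sig + del0/2)).
    assert (s' >= sig). { unfold s'. apply Rmin_case; lra. }
    split. unfold s' in *; lra.
    apply (Ext s0). auto. unfold s' in *; lra.
    pose proof (Hc s0 ltac:(lra) ltac:(apply Rabs_def1; lra)).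
    pose proof (Hc s' ltac:(unfold s' in *; lra) ltac:(apply Rabs_def1; unfold s' in *; lra)).
    rewrite (Hd2 (g s') (g sig)) in H3. specialize (Hd3 (g s0) (g sig) (g s')). lra. }
  assert (sig = 1).
  { destruct (Req_dec sig 1); auto. pose proof (Hub _ Hs'). revert H0. unfold s'.
    apply Rmin_case; intros; lra. }
  assert (s' = 1) by (unfold s'; apply Rmin_left; lra).
  destruct Hs' as [_ (t & n & a & b & c)]. exists t, n. repeat split; auto.
  congruence. apply c; auto. apply c; auto.
Qed.

Lemma csum_psum {X} (d : X -> X -> R) g t n : csum d (fun i => g (t i)) n = psum d g t n.
Proof. induction n; simpl; auto. rewrite IHn; reflexivity. Qed.

Lemma Qbase (X : Type) (d : X -> X -> R) (Xk : nat -> X -> Prop) (C : R) :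
  is_metric d -> 0 < C -> (forall k, quasiconvex d (Xk k) C) ->
  hausdorff_cvg d Xk (fun _ => True) -> forall x y, QQ d x y (C * d x y).
Proof.
  intros Hm hC Hq Hh x y del eps hd he.
  pose proof Hm as (Hd0 & Hd1 & Hd2 & Hd3).
  set (eta := Rmin (del/3) (eps / (4*C + 5))).
  assert (heta : 0 < eta) by (apply Rmin_pos; [lra| apply Rdiv_lt_0_compat; lra]).
  assert (heta1 : eta <= del/3) by apply Rmin_l.
  assert (heta2 : eta * (4*C+5) <= eps).
  { assert (eta <= eps / (4*C+5)) by apply Rmin_r.
    apply Rmult_le_compat_r with (r := 4*C+5) in H; [|lra].
    unfold Rdiv in H. rewrite Rmult_assoc, Rinv_l in H; lra. }
  destruct (Hh eta heta) as [N HN]. destruct (HN N (le_n N)) as [_ H2].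
  destruct (H2 x I eta heta) as (x' & hx' & dx).
  destruct (H2 y I eta heta) as (y' & hy' & dy).
  destruct (Hq N x' y' hx' hy' eta heta) as (g & hg & g0 & g1 & hl).
  destruct (fine d _ g del Hm hg hd) as (t & n & hp & hst).
  assert (Hc : chain d del x' y' (psum d g t n)).
  { exists (fun i => g (t i)), n. destruct hp as (p0 & p1 & _). repeat split.
    rewrite p0; auto. rewrite p1; auto. exact hst. rewrite csum_psum. lra. }
  pose proof (hl t n hp).
  assert (Hxy : d x' y' <= d x y + 4 * eta).
  { pose proof (Hd3 x' x y'). pose proof (Hd3 x y y'). rewrite Hd2 in dx. lra. }
  eapply chain_mono; [apply Rle_refl| |
     apply (chain_app d del x y' y); [apply (chain_app d del x x' y'); [apply chain_one|exact Hc]|apply chain_one]].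
  - rewrite (Hd2 y' y) in *.
    assert (C * d x' y' <= C * (d x y + 4 * eta)) by (apply Rmult_le_compat_l; lra). nra.
  - lra.
  - rewrite Hd2. lra.
Qed.
Lemma mychoice {A B : Type} (P : A -> B -> Prop) : (forall a, exists b, P a b) -> exists f, forall a, P a (f a).
Proof.
  intros H. exists (fun a => proj1_sig (constructive_indefinite_description _ (H a))).
  intros a. destruct (constructive_indefinite_description _ (H a)). exact p.
Qed.

Fixpoint hh {X} (mid : X -> X -> R -> X) (x y : X) (L : R) (n k : nat) : X :=
  match n with
  | O => match k with O => x | _ => y end
  | S n' => if Nat.odd k then mid (hh mid x y L n' (Nat.div2 k)) (hh mid x y L n' (S (Nat.div2 k))) (L / 2 ^ n')
            else hh mid x y L n' (Nat.div2 k)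
  end.

Lemma hh_even {X} mid (x y : X) L n j : hh mid x y L (S n) (2 * j) = hh mid x y L n j.
Proof. cbn [hh]. rewrite Nat.odd_even, Nat.div2_double. reflexivity. Qed.

Lemma hh_odd {X} mid (x y : X) L n j :
  hh mid x y L (S n) (S (2 * j)) = mid (hh mid x y L n j) (hh mid x y L n (S j)) (L / 2 ^ n).
Proof.
  cbn [hh]. replace (Nat.odd (S (2 * j))) with true.
  rewrite Nat.div2_succ_double. reflexivity.
  replace (S (2*j)) with (2*j+1)%nat by lia. rewrite Nat.odd_odd. reflexivity.
Qed.

Lemma hh_lift {X} mid (x y : X) L n m a : hh mid x y L (n + m) (a * 2 ^ m) = hh mid x y L n a.
Proof.
  induction m as [|m IH].
  - rewrite Nat.add_0_r, Nat.mul_1_r. reflexivity.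
  - rewrite Nat.add_succ_r. replace (a * 2 ^ S m)%nat with (2 * (a * 2 ^ m))%nat by (simpl; lia).
    rewrite hh_even. exact IH.
Qed.

Lemma hh_inv {X} (d : X -> X -> R) mid (x y : X) L :
  (forall a b L', QQ d a b L' -> QQ d a (mid a b L') (L'/2) /\ QQ d (mid a b L') b (L'/2)) ->
  QQ d x y L -> forall n k, (k < 2 ^ n)%nat -> QQ d (hh mid x y L n k) (hh mid x y L n (S k)) (L / 2 ^ n).
Proof.
  intros Hmid H0. induction n as [|n IH]; intros k hk.
  - simpl in hk. replace k with O by lia. simpl. replace (L / 1) with L by field. exact H0.
  - destruct (Nat.Even_or_Odd k) as [[j ->]|[j ->]].
    + rewrite hh_even, hh_odd. replace (L / 2 ^ S n) with (L / 2 ^ n / 2) by (simpl; field; apply pow_nonzero; lra).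
      apply Hmid. apply IH. simpl in hk. lia.
    + replace (2 * j + 1)%nat with (S (2 * j)) by lia.
      replace (S (S (2 * j))) with (2 * S j)%nat by lia.
      rewrite hh_even, hh_odd. replace (L / 2 ^ S n) with (L / 2 ^ n / 2) by (simpl; field; apply pow_nonzero; lra).
      apply Hmid. apply IH. simpl in hk. lia.
Qed.

Lemma hh_level {X} (d : X -> X -> R) mid (x y : X) L :
  (forall n k, (k < 2 ^ n)%nat -> QQ d (hh mid x y L n k) (hh mid x y L n (S k)) (L / 2 ^ n)) ->
  forall n i j, (i <= j <= 2 ^ n)%nat -> QQ d (hh mid x y L n i) (hh mid x y L n j) ((INR j - INR i) * (L / 2 ^ n)).
Proof.
  intros H n i j. induction j as [|j IH]; intros hij.
  - replace i with O by lia. eapply QQ_mono; [|apply QQ_refl]. simpl; lra.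
  - destruct (Nat.eq_dec i (S j)) as [->|hne].
    + eapply QQ_mono; [|apply QQ_refl]. lra.
    + eapply QQ_mono; [|apply (QQ_trans d _ (hh mid x y L n j)); [apply IH; lia|apply H; lia]].
      pose proof (S_INR j) as E. rewrite E. ring_simplify. lra.
Qed.

Lemma pow2_ge n : INR n + 1 <= 2 ^ n.
Proof. induction n. simpl; lra. rewrite S_INR. pose proof (pos_INR n). cbn [pow]. lra. Qed.

Lemma pow2_small e : 0 < e -> exists N, forall m, (N <= m)%nat -> / 2 ^ m <= e.
Proof.
  intros he. destruct (archimed_cor1 e he) as (N & hN & hN0). exists N. intros m hm.
  pose proof (pow2_ge m). pose proof (le_INR _ _ hm). pose proof (lt_0_INR _ hN0).
  apply Rle_trans with (/ INR N); [|lra]. apply Rinv_le_contravar; lra.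
Qed.

Lemma le_eps a b : (forall eta, 0 < eta -> a <= b + eta) -> a <= b.
Proof.
  intros H. apply Rnot_lt_le; intro h. specialize (H ((a - b)/2) ltac:(lra)). lra.
Qed.

Lemma dyad t n : exists k, 0 <= t <= 1 -> (k <= 2 ^ n)%nat /\ Rabs (t - INR k / 2 ^ n) <= / 2 ^ n.
Proof.
  destruct (classic (0 <= t <= 1)) as [ht|ht]; [|exists O; tauto].
  assert (hp : 0 < 2 ^ n) by (apply pow_lt; lra).
  destruct (search (fun i => INR i / 2 ^ n) t (2 ^ n)) as (i & hi & h1 & h2).
  { simpl. unfold Rdiv. rewrite Rmult_0_l. lra. }
  exists i. intros _. split; auto. cbv beta in h1, h2.
  destruct h2 as [->|h2].
  - rewrite pow_INR in *. replace (INR 2) with 2 in * by (simpl; lra).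
    replace (2 ^ n / 2 ^ n) with 1 in * by (field; lra).
    rewrite Rabs_left1 by lra. assert (0 < / 2 ^ n) by (apply Rinv_0_lt_compat; lra). lra.
  - rewrite S_INR in h2. rewrite Rabs_right by lra.
    replace ((INR i + 1) / 2 ^ n) with (INR i / 2 ^ n + / 2 ^ n) in h2 by (field; lra). lra.
Qed.
Lemma build {X} (d : X -> X -> R) x y L : is_metric d -> d_compact d -> 0 <= L -> QQ d x y L ->
  exists g : R -> X, (forall s t, 0 <= s <= 1 -> 0 <= t <= 1 -> d (g s) (g t) <= L * Rabs (s - t))
    /\ g 0 = x /\ g 1 = y.
Proof.
  intros Hm Hc hL H0. pose proof Hm as (Hd0 & Hd1 & Hd2 & Hd3).
  destruct (mychoice (fun (p : X * X * R) z =>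
     QQ d (fst (fst p)) (snd (fst p)) (snd p) ->
     QQ d (fst (fst p)) z (snd p / 2) /\ QQ d z (snd (fst p)) (snd p / 2))) as [fm Hfm].
  { intros [[a b] L']. simpl. destruct (classic (QQ d a b L')) as [h|h].
    - destruct (midpoint d a b L' Hm Hc h) as [z hz]. exists z; auto.
    - exists a; tauto. }
  set (mid := fun a b L' => fm (a, b, L')).
  assert (Hmid : forall a b L', QQ d a b L' -> QQ d a (mid a b L') (L'/2) /\ QQ d (mid a b L') b (L'/2)).
  { intros a b L' h. exact (Hfm (a, b, L') h). }
  set (h := hh mid x y L).
  pose proof (hh_level d mid x y L (hh_inv d mid x y L Hmid H0)) as Hlev. fold h in Hlev.
  assert (hp : forall n, 0 < 2 ^ n) by (intros; apply pow_lt; lra).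
  assert (Hdist : forall n i j, (i <= 2 ^ n)%nat -> (j <= 2 ^ n)%nat ->
            d (h n i) (h n j) <= Rabs (INR i - INR j) * (L / 2 ^ n)).
  { intros n i j hi hj. destruct (Nat.le_ge_cases i j) as [hij|hij].
    - apply QQ_d; auto. rewrite Rabs_left1. eapply QQ_mono; [|apply Hlev; lia]. lra.
      apply le_INR in hij. lra.
    - rewrite Hd2. apply QQ_d; auto. rewrite Rabs_right. eapply QQ_mono; [|apply Hlev; lia]. lra.
      apply le_INR in hij. lra. }
  assert (Hcross : forall n m a b, (a <= 2 ^ n)%nat -> (b <= 2 ^ m)%nat ->
            d (h n a) (h m b) <= L * Rabs (INR a / 2 ^ n - INR b / 2 ^ m)).
  { intros n m a b ha hb. unfold h. rewrite <- (hh_lift mid x y L n m a), <- (hh_lift mid x y L m n b).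
    rewrite (Nat.add_comm m n). fold h.
    eapply Rle_trans; [apply Hdist|].
    - rewrite Nat.pow_add_r. apply Nat.mul_le_mono_r. exact ha.
    - rewrite Nat.pow_add_r, Nat.mul_comm. apply Nat.mul_le_mono_l. exact hb.
    - rewrite !mult_INR, !pow_INR. replace (INR 2) with 2 by (simpl; lra).
      pose proof (hp n). pose proof (hp m).
      replace (INR a * 2 ^ m - INR b * 2 ^ n) with ((INR a / 2 ^ n - INR b / 2 ^ m) * (2 ^ n * 2 ^ m))
        by (field; lra).
      rewrite Rabs_mult, (Rabs_right (2 ^ n * 2 ^ m)) by nra. rewrite pow_add.
      right. field. lra. }
  destruct (mychoice (fun (p : R * nat) k => 0 <= fst p <= 1 ->
     (k <= 2 ^ snd p)%nat /\ Rabs (fst p - INR k / 2 ^ snd p) <= / 2 ^ snd p)) as [kf0 Hkf0].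
  { intros [t n]. apply dyad. }
  set (kf := fun t n => kf0 (t, n)).
  assert (Hkf : forall t n, 0 <= t <= 1 -> (kf t n <= 2 ^ n)%nat /\ Rabs (t - INR (kf t n) / 2 ^ n) <= / 2 ^ n).
  { intros t n ht. exact (Hkf0 (t, n) ht). }
  destruct (mychoice (fun t p => forall eta, 0 < eta -> forall N, exists n, (N <= n)%nat /\ d (h n (kf t n)) p < eta))
    as [gf Hgf].
  { intros t. apply (cluster d Hm Hc). }
  assert (HA : forall t n i, 0 <= t <= 1 -> (i <= 2 ^ n)%nat -> d (gf t) (h n i) <= L * Rabs (t - INR i / 2 ^ n)).
  { intros t n i ht hi. apply le_eps. intros eta he.
    destruct (pow2_small (eta / (2 * (L + 1)))) as [N HN]. apply Rdiv_lt_0_compat; lra.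
    destruct (Hgf t (eta/2) ltac:(lra) N) as (m & hm & hd).
    destruct (Hkf t m ht) as [hk1 hk2].
    pose proof (Hcross m n (kf t m) i hk1 hi) as E1.
    pose proof (HN m hm) as E2.
    pose proof (Hd3 (gf t) (h m (kf t m)) (h n i)) as E3. pose proof (Hd2 (h m (kf t m)) (gf t)) as E6.
    assert (Rabs (INR (kf t m) / 2 ^ m - INR i / 2 ^ n) <= Rabs (t - INR i / 2 ^ n) + / 2 ^ m).
    { pose proof (Rabs_triang (INR (kf t m) / 2 ^ m - t) (t - INR i / 2 ^ n)) as E4.
      rewrite (Rabs_minus_sym (INR (kf t m) / 2 ^ m)) in E4. replace (INR (kf t m) / 2 ^ m - t + (t - INR i / 2 ^ n))
        with (INR (kf t m) / 2 ^ m - INR i / 2 ^ n) in E4 by ring. lra. }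
    assert (L * (/ 2 ^ m) <= eta / 2).
    { apply Rle_trans with (L * (eta / (2 * (L + 1)))). apply Rmult_le_compat_l; lra.
      apply Rmult_le_reg_r with (2 * (L + 1)); [lra|].
      replace (L * (eta / (2 * (L + 1))) * (2 * (L + 1))) with (L * eta) by (field; lra). nra. }
    assert (L * Rabs (INR (kf t m) / 2 ^ m - INR i / 2 ^ n) <= L * (Rabs (t - INR i / 2 ^ n) + / 2 ^ m))
      by (apply Rmult_le_compat_l; lra).
    lra. }
  exists gf. split; [|split].
  - intros s t hs ht. apply le_eps. intros eta he.
    destruct (pow2_small (eta / (2 * (L + 1)))) as [N HN]. apply Rdiv_lt_0_compat; lra.
    destruct (Hkf s N hs) as [hk1 hk2].
    pose proof (HA s N (kf s N) hs hk1) as E1. pose proof (HA t N (kf s N) ht hk1) as E2.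
    pose proof (Hd3 (gf s) (h N (kf s N)) (gf t)) as E3. pose proof (Hd2 (h N (kf s N)) (gf t)) as E6.
    pose proof (HN N (le_n N)) as E4.
    assert (Rabs (t - INR (kf s N) / 2 ^ N) <= Rabs (s - t) + / 2 ^ N).
    { pose proof (Rabs_triang (t - s) (s - INR (kf s N) / 2 ^ N)) as E5.
      rewrite (Rabs_minus_sym t s) in E5. replace (t - s + (s - INR (kf s N) / 2 ^ N))
        with (t - INR (kf s N) / 2 ^ N) in E5 by ring. lra. }
    assert (L * (/ 2 ^ N) <= eta / 2).
    { apply Rle_trans with (L * (eta / (2 * (L + 1)))). apply Rmult_le_compat_l; lra.
      apply Rmult_le_reg_r with (2 * (L + 1)); [lra|].
      replace (L * (eta / (2 * (L + 1))) * (2 * (L + 1))) with (L * eta) by (field; lra). nra. }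
    assert (L * Rabs (t - INR (kf s N) / 2 ^ N) <= L * (Rabs (s - t) + / 2 ^ N))
      by (apply Rmult_le_compat_l; lra).
    assert (L * Rabs (s - INR (kf s N) / 2 ^ N) <= L * / 2 ^ N)
      by (apply Rmult_le_compat_l; lra).
    lra.
  - pose proof (HA 0 O O ltac:(lra) ltac:(simpl; lia)). apply Hd1. apply Rle_antisym; [|apply Hd0].
    simpl in H. replace (0 - 0 / 1) with 0 in H by field. rewrite Rabs_R0, Rmult_0_r in H. exact H.
  - pose proof (HA 1 O 1%nat ltac:(lra) ltac:(simpl; lia)). apply Hd1. apply Rle_antisym; [|apply Hd0].
    simpl in H. replace (1 - 1 / 1) with 0 in H by field. rewrite Rabs_R0, Rmult_0_r in H. exact H.
Qed.
Theorem lemma4p6 (X : Type) (d : X -> X -> R) (Xk : nat -> X -> Prop) (C : R) :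
  is_metric d -> d_compact d -> 0 < C ->
  (forall k, quasiconvex d (Xk k) C) ->
  hausdorff_cvg d Xk (fun _ => True) ->
  quasiconvex d (fun _ => True) C.
Proof.
  intros Hm Hc hC Hq Hh x y _ _ eps he.
  pose proof (Qbase X d Xk C Hm hC Hq Hh x y) as HQ.
  assert (hL : 0 <= C * d x y) by (apply Rmult_le_pos; [lra | apply (proj1 Hm)]).
  set (L := C * d x y) in *.
  destruct (build d x y L Hm Hc hL HQ) as (g & Hg & g0 & g1).
  exists g. split; [split|split; [exact g0|split; [exact g1|]]].
  - intros; exact I.
  - intros t ht e' he'. exists (e' / (L + 1)). split. apply Rdiv_lt_0_compat; lra.
    intros s hs hst. eapply Rle_lt_trans. apply Hg; auto.
    apply Rle_lt_trans with (L * (e' / (L + 1))). apply Rmult_le_compat_l; lra.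
    apply Rmult_lt_reg_r with (L + 1); [lra|].
    replace (L * (e' / (L + 1)) * (L + 1)) with (L * e') by (field; lra). nra.
  - intros t n (p0 & p1 & pm).
    assert (Hlo : forall i, (i <= n)%nat -> 0 <= t i).
    { induction i; intros hi. lra. specialize (IHi ltac:(lia)). specialize (pm i ltac:(lia)). lra. }
    assert (Hhi : forall k i, (i + k = n)%nat -> t i <= 1).
    { induction k; intros i hi. rewrite Nat.add_0_r in hi. subst. lra.
      specialize (IHk (S i) ltac:(lia)). specialize (pm i ltac:(lia)). lra. }
    assert (Hs : forall m, (m <= n)%nat -> psum d g t m <= L * (t m - t O)).
    { induction m; intros hmn; simpl. lra.
      specialize (IHm ltac:(lia)).
      assert (d (g (t m)) (g (t (S m))) <= L * Rabs (t m - t (S m))).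
      { apply Hg; split; try (apply Hlo; lia).
        apply (Hhi (n - m)%nat); lia. apply (Hhi (n - S m)%nat); lia. }
      rewrite Rabs_left1 in H by (specialize (pm m ltac:(lia)); lra). lra. }
    specialize (Hs n (le_n n)). rewrite p0, p1 in Hs. lra.
Qed.
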